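(* Let $\mathbf P=(P,\leq,{}',0,1)$ be a bounded poset which is the horizontal sum of pseudo-orthomodular posets $\mathbf P_{\alpha}=(P_{\alpha},\leq_{\alpha},{}'_{\alpha},0,1)$, $\alpha\in\Lambda$ (with $'$ acting on each summand as $'_\alpha$). Then $\mathbf P$ is a pseudo-orthomodular poset.
   Context: For $M\subseteq P$, $U(M)=\{x\in P\mid y\le x \text{ for all } y\in M\}$ and $L(M)=\{x\in P\mid x\le y\text{ for all }y\in M\}$; write $U(a,b)=U(\{a,b\})$, $L(a,b)=L(\{a,b\})$, and $LU(\cdot)=L(U(\cdot))$ etc. A poset with complementation is a bounded poset $(P,\le,{}',0,1)$ where $'$ is an antitone involution ($x\le y\Rightarrow y'\le x'$, $x''=x$) satisfying $L(x,x')=\{0\}$ and $U(x,x')=\{1\}$ for all $x$. It is pseudo-orthomodular if $L(U(L(x,y),y'),y)=L(x,y)$ for all $x,y\in P$ (equivalently $U(L(U(x,y),y'),y)=U(x,y)$). The horizontal sum of a family of bounded posets is obtained from their disjoint union by identifying all bottom elements into $0$ and all top elements into $1$; elements of different summands other than $0,1$ are incomparable. *)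

(* Defs.v *)
From Stdlib Require Import Classical ClassicalEpsilon.

Set Implicit Arguments.

Definition Ucone {T : Type} (le : T -> T -> Prop) (M : T -> Prop) : T -> Prop :=
  fun x => forall y, M y -> le y x.
Definition Lcone {T : Type} (le : T -> T -> Prop) (M : T -> Prop) : T -> Prop :=
  fun x => forall y, M y -> le x y.

Definition pair_set {T : Type} (a b : T) : T -> Prop := fun y => y = a \/ y = b.
Definition single_set {T : Type} (a : T) : T -> Prop := fun y => y = a.
Definition union_set {T : Type} (A B : T -> Prop) : T -> Prop := fun y => A y \/ B y.
Definition set_eq {T : Type} (A B : T -> Prop) : Prop := forall y, A y <-> B y.

Definition is_poset {T : Type} (le : T -> T -> Prop) : Prop :=
  (forall x, le x x) /\
  (forall x y, le x y -> le y x -> x = y) /\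
  (forall x y z, le x y -> le y z -> le x z).

Definition poset_with_complementation {T : Type} (le : T -> T -> Prop)
  (c : T -> T) (z o : T) : Prop :=
  is_poset le /\
  (forall x, le z x /\ le x o) /\
  (forall x y, le x y -> le (c y) (c x)) /\
  (forall x, c (c x) = x) /\
  (forall x, set_eq (Lcone le (pair_set x (c x))) (single_set z)) /\
  (forall x, set_eq (Ucone le (pair_set x (c x))) (single_set o)).

Definition pseudo_orthomodular {T : Type} (le : T -> T -> Prop)
  (c : T -> T) (z o : T) : Prop :=
  poset_with_complementation le c z o /\
  (forall x y,
     set_eq
       (Lcone le (union_set
          (Ucone le (union_set (Lcone le (pair_set x y)) (single_set (c y))))
          (single_set y)))
       (Lcone le (pair_set x y))).

Section HSum.
Variables (Lam : Type) (P : Lam -> Type)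
  (leP : forall a, P a -> P a -> Prop) (cP : forall a, P a -> P a)
  (zP oP : forall a, P a).

Definition inner (a : Lam) : Type := { x : P a | x <> zP a /\ x <> oP a }.

Inductive hsum : Type :=
| HBot : hsum
| HTop : hsum
| HElt : forall a : Lam, inner a -> hsum.

Definition hsum_le (u v : hsum) : Prop :=
  match u, v with
  | HBot, _ => True
  | _, HTop => True
  | @HElt a x, @HElt b y =>
      exists e : a = b, @leP b (eq_rect a P (proj1_sig x) b e) (proj1_sig y)
  | _, _ => False
  end.

Definition hsum_emb (a : Lam) (x : P a) : hsum :=
  match excluded_middle_informative (x = zP a) with
  | left _ => HBot
  | right nz =>
      match excluded_middle_informative (x = oP a) with
      | left _ => HTop
      | right no => @HElt a (exist _ x (conj nz no))
      end
  end.

Definition hsum_comp (u : hsum) : hsum :=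
  match u with
  | HBot => HTop
  | HTop => HBot
  | @HElt a x => @hsum_emb a (cP (proj1_sig x))
  end.
End HSum.

Arguments hsum_le {Lam P} leP zP oP u v.
Arguments hsum_comp {Lam P} cP zP oP u.
Arguments HBot {Lam P zP oP}.
Arguments HTop {Lam P zP oP}.

(* Main.v *)
Require Import Defs.
From Stdlib Require Import Classical ClassicalEpsilon ProofIrrelevance.

Section Proof4.
Variables (Lam : Type) (P : Lam -> Type)
  (leP : forall a, P a -> P a -> Prop) (cP : forall a, P a -> P a)
  (zP oP : forall a, P a).
Hypothesis H : forall a, pseudo_orthomodular (leP a) (cP a) (zP a) (oP a).

Lemma HH a : (((forall x : P a, leP a x x) /\ (forall x y : P a, leP a x y -> leP a y x -> x = y) /\
  (forall x y z : P a, leP a x y -> leP a y z -> leP a x z)) /\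
  (forall x, leP a (zP a) x /\ leP a x (oP a)) /\
  (forall x y, leP a x y -> leP a (cP a y) (cP a x)) /\
  (forall x, cP a (cP a x) = x) /\
  (forall x, set_eq (Lcone (leP a) (pair_set x (cP a x))) (single_set (zP a))) /\
  (forall x, set_eq (Ucone (leP a) (pair_set x (cP a x))) (single_set (oP a)))) /\
  (forall x y,
     set_eq
       (Lcone (leP a) (union_set
          (Ucone (leP a) (union_set (Lcone (leP a) (pair_set x y)) (single_set (cP a y))))
          (single_set y)))
       (Lcone (leP a) (pair_set x y))).
Proof. exact (H a). Qed.

Notation hs := (hsum P zP oP).
Notation le := (hsum_le leP zP oP).
Notation cc := (hsum_comp cP zP oP).
Notation emb := (hsum_emb P zP oP).

Lemma refl a (x : P a) : leP _ x x.
Proof. destruct (HH a) as [[[r _] _] _]. apply r. Qed.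
Lemma antis a (x y : P a) : leP _ x y -> leP _ y x -> x = y.
Proof. destruct (HH a) as [[[_ [r _]] _] _]. apply r. Qed.
Lemma trans a (x y z : P a) : leP _ x y -> leP _ y z -> leP _ x z.
Proof. destruct (HH a) as [[[_ [_ r]] _] _]. apply r. Qed.
Lemma bnd0 a (x : P a) : leP _ (zP a) x.
Proof. destruct (HH a) as [[_ [r _]] _]. apply r. Qed.
Lemma bnd1 a (x : P a) : leP _ x (oP a).
Proof. destruct (HH a) as [[_ [r _]] _]. apply r. Qed.
Lemma anti a (x y : P a) : leP _ x y -> leP _ (cP _ y) (cP _ x).
Proof. destruct (HH a) as [[_ [_ [r _]]] _]. apply r. Qed.
Lemma invol a (x : P a) : cP _ (cP _ x) = x.
Proof. destruct (HH a) as [[_ [_ [_ [r _]]]] _]. apply r. Qed.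
Lemma lc a (x : P a) p : leP _ p x -> leP _ p (cP _ x) -> p = zP a.
Proof.
  destruct (HH a) as [[_ [_ [_ [_ [r _]]]]] _]. intros h1 h2.
  apply (r x p). intros y [-> | ->]; assumption.
Qed.
Lemma uc a (x : P a) p : leP _ x p -> leP _ (cP _ x) p -> p = oP a.
Proof.
  destruct (HH a) as [[_ [_ [_ [_ [_ r]]]]] _]. intros h1 h2.
  apply (r x p). intros y [-> | ->]; assumption.
Qed.
Lemma pom a (x y : P a) : forall r,
  Lcone (leP a) (union_set
          (Ucone (leP a) (union_set (Lcone (leP a) (pair_set x y)) (single_set (cP _ y))))
          (single_set y)) r -> Lcone (leP a) (pair_set x y) r.
Proof. destruct (HH a) as [_ r]. intros w. apply (r x y w). Qed.

Lemma c0 a : cP _ (zP a) = oP a.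
Proof.
  apply uc with (x := zP a). apply bnd0. apply refl.
Qed.

Lemma c_nz a (x : P a) : x <> zP a -> x <> oP a -> cP _ x <> zP a /\ cP _ x <> oP a.
Proof.
  intros h1 h2; split; intro e.
  - apply h2. rewrite <- (invol _ x), e. apply c0.
  - apply h1. rewrite <- (invol _ x), e. rewrite <- (c0 a). apply invol.
Qed.

Lemma emb0 a : emb a (zP a) = HBot.
Proof.
  unfold hsum_emb. destruct (excluded_middle_informative _) as [|n]; [reflexivity|now elim n].
Qed.

Lemma emb_in a (p : P a) (h : p <> zP a /\ p <> oP a) : emb a p = HElt (exist _ p h).
Proof.
  unfold hsum_emb. destruct (excluded_middle_informative _) as [e|n]; [now elim (proj1 h)|].
  destruct (excluded_middle_informative _) as [e|n']; [now elim (proj2 h)|].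
  f_equal. f_equal. apply proof_irrelevance.
Qed.

Lemma emb_inner a (y : inner P zP oP a) : emb a (proj1_sig y) = HElt y.
Proof. destruct y as [y h]. apply emb_in. Qed.

Lemma emb1 a : zP a <> oP a -> emb a (oP a) = HTop.
Proof.
  intro h. unfold hsum_emb. destruct (excluded_middle_informative _) as [e|n]; [now elim h|].
  destruct (excluded_middle_informative _) as [e|n']; [reflexivity|now elim n'].
Qed.

Lemma le_top (u : hs) : le u HTop.
Proof. destruct u; exact I. Qed.
Lemma le_bot (u : hs) : le HBot u.
Proof. destruct u; exact I. Qed.
Lemma le_bot_eq (u : hs) : le u HBot -> u = HBot.
Proof. destruct u; simpl; tauto. Qed.
Lemma le_top_eq (u : hs) : le HTop u -> u = HTop.
Proof. destruct u; simpl; tauto. Qed.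

Lemma le_elt a (x y : inner P zP oP a) : le (HElt x) (HElt y) <-> leP _ (proj1_sig x) (proj1_sig y).
Proof.
  simpl. split.
  - intros [e h]. rewrite (proof_irrelevance _ e eq_refl) in h. exact h.
  - intro h. exists eq_refl. exact h.
Qed.

Lemma emb_le a (p q : P a) : le (emb a p) (emb a q) <-> leP _ p q.
Proof.
  unfold hsum_emb.
  destruct (excluded_middle_informative (p = zP a)) as [ep|np].
  { subst. split; intros _; [apply bnd0| apply le_bot]. }
  destruct (excluded_middle_informative (p = oP a)) as [ep'|np'].
  - subst. destruct (excluded_middle_informative (q = zP a)) as [eq|nq].
    { subst. simpl. split; [tauto|]. intro h. elim np. apply antis; [exact h|apply bnd0]. }
    destruct (excluded_middle_informative (q = oP a)) as [eq'|nq'].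
    { subst. simpl. split; intros _; [apply refl|exact I]. }
    simpl. split; [tauto|]. intro h. elim nq'. apply antis; [apply bnd1|exact h].
  - destruct (excluded_middle_informative (q = zP a)) as [eq|nq].
    { subst. simpl. split; [tauto|]. intro h. elim np. apply antis; [exact h|apply bnd0]. }
    destruct (excluded_middle_informative (q = oP a)) as [eq'|nq'].
    { subst. simpl. split; intros _; [apply bnd1|exact I]. }
    rewrite le_elt. simpl. tauto.
Qed.

Lemma inner_nt a (y : inner P zP oP a) : zP a <> oP a.
Proof.
  destruct y as [y [h1 h2]]. intro e. apply h1. apply antis; [|apply bnd0].
  rewrite e. apply bnd1.
Qed.

Lemma le_r a (y : inner P zP oP a) u : le u (HElt y) -> exists p, u = emb a p /\ leP _ p (proj1_sig y).
Proof.
  destruct u as [| |b x]; simpl.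
  - intros _. exists (zP a). rewrite emb0. split; [reflexivity|apply bnd0].
  - tauto.
  - intros [e h]. subst b. simpl in h. exists (proj1_sig x). rewrite emb_inner. tauto.
Qed.

Lemma le_l a (y : inner P zP oP a) u : le (HElt y) u -> exists p, u = emb a p /\ leP _ (proj1_sig y) p.
Proof.
  destruct u as [| |b x]; simpl.
  - tauto.
  - intros _. exists (oP a). rewrite emb1 by (exact (inner_nt _ y)). split; [reflexivity|apply bnd1].
  - intros [e h]. subst b. simpl in h. exists (proj1_sig x). rewrite emb_inner. tauto.
Qed.

Lemma comp_elt a (x : inner P zP oP a) : cc (HElt x) = emb a (cP _ (proj1_sig x)).
Proof. reflexivity. Qed.

Lemma le_emb_elt a (p : P a) (y : inner P zP oP a) : le (emb a p) (HElt y) <-> leP _ p (proj1_sig y).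
Proof. rewrite <- emb_inner. apply emb_le. Qed.
Lemma le_elt_emb a (p : P a) (y : inner P zP oP a) : le (HElt y) (emb a p) <-> leP _ (proj1_sig y) p.
Proof. rewrite <- emb_inner. apply emb_le. Qed.

Lemma hs_poset : is_poset le.
Proof.
  split; [|split].
  - intros [| |a x]; simpl; auto. exists eq_refl. apply refl.
  - intros [| |a x] [| |b y]; simpl; try tauto.
    intros [e h] [e' h']. subst b. simpl in h.
    rewrite (proof_irrelevance _ e' eq_refl) in h'. simpl in h'.
    destruct x as [x hx], y as [y hy]. simpl in *.
    assert (x = y) by (apply antis; assumption). subst y.
    rewrite (proof_irrelevance _ hx hy). reflexivity.
  - intros [| |a x] [| |b y] [| |d z]; simpl; try tauto.
    intros [e h] [e' h']. subst b d. simpl in *. exists eq_refl. simpl.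
    eapply trans; eauto.
Qed.

Lemma hs_compl (x : hs) : set_eq (Lcone le (pair_set x (cc x))) (single_set HBot).
Proof.
  intro w. unfold single_set. split.
  - intro h. assert (h1 := h x (or_introl eq_refl)). assert (h2 := h (cc x) (or_intror eq_refl)).
    destruct x as [| |a x].
    + apply le_bot_eq; exact h1.
    + apply le_bot_eq; exact h2.
    + apply le_r in h1. destruct h1 as [p [-> hp]].
      rewrite comp_elt in h2. apply emb_le in h2.
      rewrite (lc _ _ _ hp h2). apply emb0.
  - intros ->. intros y _. apply le_bot.
Qed.

Lemma hs_ucompl (x : hs) : set_eq (Ucone le (pair_set x (cc x))) (single_set HTop).
Proof.
  intro w. unfold single_set. split.
  - intro h. assert (h1 := h x (or_introl eq_refl)). assert (h2 := h (cc x) (or_intror eq_refl)).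
    destruct x as [| |a x].
    + apply le_top_eq; exact h2.
    + apply le_top_eq; exact h1.
    + pose proof (inner_nt _ x) as nt.
      apply le_l in h1. destruct h1 as [p [-> hp]].
      rewrite comp_elt in h2. apply emb_le in h2.
      rewrite (uc _ _ _ hp h2). apply emb1; exact nt.
  - intros ->. intros y _. apply le_top.
Qed.

Lemma hs_pwc : poset_with_complementation le cc HBot HTop.
Proof.
  split; [apply hs_poset|]. split; [intro; split; [apply le_bot|apply le_top]|].
  split; [|split; [|split; [apply hs_compl|apply hs_ucompl]]].
  - intros [| |a x] [| |b y]; simpl; intro h; try tauto; try apply le_top; try apply le_bot.
    destruct h as [e h]. subst b. simpl in h.
    destruct x as [x [hx1 hx2]], y as [y [hy1 hy2]]. simpl in *.
    apply emb_le. apply anti. exact h.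
  - intros [| |a x]; try reflexivity.
    destruct x as [x [hx1 hx2]]. rewrite comp_elt. simpl proj1_sig.
    rewrite (emb_in _ _ (c_nz _ _ hx1 hx2)). rewrite comp_elt. simpl proj1_sig.
    rewrite invol. exact (emb_inner _ (exist _ x (conj hx1 hx2))).
Qed.

Lemma pair_in_a a (x y w : P a) : leP a w x -> leP a w y -> Lcone (leP a) (pair_set x y) w.
Proof. intros h1 h2 z [-> | ->]; assumption. Qed.

Lemma pair_in (x y w : hs) : le w x -> le w y -> Lcone le (pair_set x y) w.
Proof. intros h1 h2 z [-> | ->]; assumption. Qed.

Lemma hs_pom (x y w : hs) :
  Lcone le (union_set
          (Ucone le (union_set (Lcone le (pair_set x y)) (single_set (cc y))))
          (single_set y)) w -> Lcone le (pair_set x y) w.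
Proof.
  intro h. assert (hy : le w y) by (apply h; right; reflexivity).
  apply pair_in; [|exact hy].
  assert (hU : forall v, Ucone le (union_set (Lcone le (pair_set x y)) (single_set (cc y))) v -> le w v)
    by (intros v hv; apply h; left; exact hv).
  assert (Hc : (forall u, Lcone le (pair_set x y) u -> le u (cc y)) -> le w x).
  { intro hc. assert (hw : le w (cc y)).
    { apply hU. intros v [hv | hv]; [apply hc; exact hv|]. rewrite hv. apply (proj1 hs_poset). }
    assert (w = HBot). { apply (hs_compl y w). apply pair_in; assumption. }
    subst w. apply le_bot. }
  destruct y as [| |a y].
  - apply le_bot_eq in hy. subst w. apply le_bot.
  - apply hU. intros v [hv | hv].
    + apply hv. left; reflexivity.
    + rewrite hv. apply le_bot.
  - destruct x as [| |b x].
    + apply Hc. intros u hu. assert (u = HBot) by (apply le_bot_eq; apply hu; left; reflexivity).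
      subst u. apply le_bot.
    + apply le_top.
    + destruct (classic (b = a)) as [e | ne].
      * subst b. apply le_r in hy. destruct hy as [r [-> hr]].
        apply le_emb_elt.
        assert (hp := pom a (proj1_sig x) (proj1_sig y) r).
        refine (hp _ (proj1_sig x) (or_introl eq_refl)).
        intros z [hz | hz]; [| rewrite hz; exact hr].
        apply emb_le. apply hU. intros v [hv | hv].
        -- assert (hv1 := hv (HElt x) (or_introl eq_refl)).
           assert (hv2 := hv (HElt y) (or_intror eq_refl)).
           apply le_r in hv2. destruct hv2 as [p [-> hp2]].
           apply le_emb_elt in hv1. apply emb_le. apply hz. left. apply pair_in_a; assumption.
        -- rewrite hv, comp_elt. apply emb_le. apply hz. right. reflexivity.
      * apply Hc. intros u hu.
        assert (hu1 := hu (HElt x) (or_introl eq_refl)).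
        assert (hu2 := hu (HElt y) (or_intror eq_refl)).
        destruct u as [| |d z]; simpl in hu1, hu2.
        -- apply le_bot.
        -- contradiction.
        -- destruct hu1 as [e1 _], hu2 as [e2 _]. subst. contradiction.
Qed.

End Proof4.

Theorem proposition4 (Lam : Type) (P : Lam -> Type)
  (leP : forall a, P a -> P a -> Prop) (cP : forall a, P a -> P a)
  (zP oP : forall a, P a) :
  (forall a, pseudo_orthomodular (leP a) (cP a) (zP a) (oP a)) ->
  pseudo_orthomodular (hsum_le leP zP oP) (hsum_comp cP zP oP)
    (@HBot Lam P zP oP) (@HTop Lam P zP oP).
Proof.
  intro H. split; [apply hs_pwc; exact H|].
  intros x y w. split; [apply hs_pom; exact H|].
  intros h z [hz | hz]; [|rewrite hz; apply h; right; reflexivity].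
  apply hz. left. exact h.
Qed.
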